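(* For any $\epsilon>0$ there exists a family $\mathcal C$ of tree-structured Ising models with $n$ leaves labeled $1,\dots,n$, with $\log|\mathcal C|\le O(n\log(n/\epsilon))$, such that for any tree-structured Ising model with leaves $1,\dots,n$ there exists a model in $\mathcal C$ whose leaf distribution is within total variation distance $\epsilon$ of the leaf distribution of the given model.
   Context: A tree-structured Ising model is given by a tree $T=(V,E)$ whose leaves are labeled $1,\dots,n$ (standing assumption: every non-leaf node has degree $3$) with edge weights $\theta_e\in[-1,1]$; spins $x_v\in\{-1,1\}$ at all nodes have probability $\propto\prod_{(u,v)\in E}\frac{1+\theta_{uv}x_ux_v}{2}$, and the leaf distribution is the marginal on the leaf spins. Total variation distance is $\frac12\sum_x|\mu(x)-\nu(x)|$. *)

(* Defs.v *)
From HB Require Import structures.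
From mathcomp Require Import all_boot all_order all_algebra.
From mathcomp Require Import all_classical all_reals exp.
Set Implicit Arguments. Unset Strict Implicit. Unset Printing Implicit Defensive.
Import Order.TTheory GRing.Theory Num.Theory.
Local Open Scope ring_scope.

Definition deg (m : nat) (e : rel 'I_m) (v : 'I_m) : nat := #|[set w | e v w]|.

Definition nedges (m : nat) (e : rel 'I_m) : nat :=
  #|[set p : 'I_m * 'I_m | (p.1 < p.2)%N && e p.1 p.2]|.

Definition is_tree (m : nat) (e : rel 'I_m) : Prop :=
  [/\ (0 < m)%N, symmetric e, irreflexive e,
      (forall u v, connect e u v) & nedges e = m.-1].

(* A tree-structured Ising model with leaves labelled 0..n-1 (paper: 1..n). *)
Record tree_ising (R : realType) (n : nat) := TreeIsing {
  nv : nat;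
  nle : (n <= nv)%N;
  adj : rel 'I_nv;
  theta : 'I_nv -> 'I_nv -> R;
  adj_tree : is_tree adj;
  leaves_ok : forall v : 'I_nv, (v < n)%N -> (deg adj v <= 1)%N;
  internal_ok : forall v : 'I_nv, (n <= v)%N -> deg adj v = 3%N;
  theta_sym : forall u v, theta u v = theta v u;
  theta_range : forall u v, adj u v -> -1 <= theta u v <= 1
}.

Definition spin (R : realType) (b : bool) : R := if b then 1 else -1.

Section Model.
Variables (R : realType) (n : nat) (M : tree_ising R n).

Definition config_weight (s : {ffun 'I_(nv M) -> bool}) : R :=
  \prod_(u : 'I_(nv M)) \prod_(v : 'I_(nv M) | (u < v)%N && @adj R n M u v)
     ((1 + @theta R n M u v * spin R (s u) * spin R (s v)) / 2).

Definition leaf_vertex (i : 'I_n) : 'I_(nv M) := widen_ord (@nle R n M) i.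

Definition leaf_dist (x : {ffun 'I_n -> bool}) : R :=
  (\sum_(s : {ffun 'I_(nv M) -> bool} | [forall i, s (leaf_vertex i) == x i])
      config_weight s)
  / (\sum_(s : {ffun 'I_(nv M) -> bool}) config_weight s).
End Model.

Definition tv_dist (R : realType) (n : nat) (mu nu : {ffun 'I_n -> bool} -> R) : R :=
  2^-1 * \sum_(x : {ffun 'I_n -> bool}) `|mu x - nu x|.

(* Main.v *)
Require Import Defs.
From HB Require Import structures.
From mathcomp Require Import all_boot all_order all_algebra.
From mathcomp Require Import all_classical all_reals exp.
From mathcomp Require Import ring lra zify.
Set Implicit Arguments. Unset Strict Implicit. Unset Printing Implicit Defensive.
Import Order.TTheory GRing.Theory Num.Theory.
Local Open Scope ring_scope.


Section Tele.
Variable R : realType.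

Lemma sum_prod_ffun (m : nat) (d : 'I_m -> bool -> R) :
  \sum_(t : {ffun 'I_m -> bool}) \prod_v d v (t v) = \prod_v (d v true + d v false).
Proof.
rewrite -(bigA_distr_bigA (fun v x => d v x)) /=.
by apply: eq_bigr => v _; rewrite big_bool.
Qed.

Lemma tele (m : nat) (a b : 'I_m -> bool -> R) :
  (forall v x, 0 <= a v x) -> (forall v x, 0 <= b v x) ->
  (forall v, a v true + a v false = 1) -> (forall v, b v true + b v false = 1) ->
  \sum_(t : {ffun 'I_m -> bool}) `| \prod_v a v (t v) - \prod_v b v (t v) |
   <= \sum_v (`|a v true - b v true| + `|a v false - b v false|).
Proof.
move=> a0 b0 a1 b1.
pose H (k : nat) (t : {ffun 'I_m -> bool}) :=
  \prod_(v : 'I_m) (if (v < k)%N then b v (t v) else a v (t v)).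
have HE : forall t : {ffun 'I_m -> bool}, \prod_v a v (t v) - \prod_v b v (t v)
              = \sum_(k < m) (H k t - H k.+1 t).
  move=> t.
  have -> : \prod_v a v (t v) = H 0%N t by apply: eq_bigr => v _.
  have -> : \prod_v b v (t v) = H m t by apply: eq_bigr => v _; rewrite ltn_ord.
  rewrite -(big_mkord xpredT (fun k => H k t - H k.+1 t)).
  have := telescope_sumr (fun k => H k t) (leq0n m).
  move=> Ht; rewrite -[LHS]opprB -Ht -sumrN; apply: eq_bigr => i _.
  by rewrite opprB.
have key : forall (k : 'I_m) (t : {ffun 'I_m -> bool}), H k t - H k.+1 t =
    (a k (t k) - b k (t k)) *
    \prod_(v | v != k) (if (v < k)%N then b v (t v) else a v (t v)).
  move=> k t; rewrite /H [X in X - _](bigD1 k) //= [X in _ - X](bigD1 k) //=.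
  rewrite ltnn ltnSn mulrBl.
  congr (_ * _ - _ * _); apply: eq_bigr => v vk.
  by rewrite ltnS leq_eqVlt (_ : (nat_of_ord v == k) = false) //; apply/negbTE.
apply: (@le_trans _ _ (\sum_t \sum_(k < m) `|H k t - H k.+1 t|)).
  by apply: ler_sum => t _; rewrite HE; apply: ler_norm_sum.
rewrite exchange_big /=; apply: ler_sum => k _.
pose d (v : 'I_m) (x : bool) :=
  if v == k then `|a k x - b k x| else (if (v < k)%N then b v x else a v x).
have -> : \sum_(t : {ffun 'I_m -> bool}) `|H k t - H k.+1 t| =
          \sum_(t : {ffun 'I_m -> bool}) \prod_v d v (t v).
  apply: eq_bigr => t _; rewrite key normrM [in RHS](bigD1 k) //= {1}/d eqxx.
  congr (_ * _); rewrite ger0_norm; last first.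
    by apply: prodr_ge0 => v _; case: ifP.
  by apply: eq_bigr => v /negbTE vk; rewrite /d vk.
rewrite sum_prod_ffun (bigD1 k) //= {1 2}/d eqxx big1 ?mulr1 //.
by move=> v /negbTE vk; rewrite /d vk; case: ifP.
Qed.
End Tele.


Section LD.
Variable R : realType.
Variable n : nat.

Definition fac (th : R) (x y : bool) : R := (1 + th * spin R x * spin R y) / 2.

Definition Wt m (p : 'I_m -> 'I_m) (th : 'I_m -> R) (s : {ffun 'I_m -> bool}) : R :=
  \prod_(v : 'I_m | val v != 0%N) fac (th v) (s v) (s (p v)).

Definition LD m (p : 'I_m -> 'I_m) (th : 'I_m -> R) (lf : 'I_n -> 'I_m)
   (x : {ffun 'I_n -> bool}) : R :=
  (\sum_(s : {ffun 'I_m -> bool} | [forall i, s (lf i) == x i]) Wt p th s) / 2.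

Definition hcond m (p : 'I_m -> 'I_m) :=
  exists h : 'I_m -> nat, forall v, val v != 0%N -> (h (p v) < h v)%N.

Definition Tm m (p : 'I_m -> 'I_m) (s : {ffun 'I_m -> bool}) : {ffun 'I_m -> bool} :=
  [ffun v => if val v == 0%N then s v else (s v == s (p v))].

Lemma Tm_inj m (p : 'I_m -> 'I_m) : hcond p -> injective (Tm p).
Proof.
move=> [h hP] s1 s2 E.
suff H : forall k v, (h v < k)%N -> s1 v = s2 v.
  by apply/ffunP => v; apply: (H (h v).+1).
elim=> [|k IH] v //.
rewrite ltnS => hv.
have := congr1 (fun f : {ffun 'I_m -> bool} => f v) E; rewrite /= !ffunE.
case: eqP => [_ //|/eqP v0].
have := IH (p v) (leq_trans (hP v v0) hv).
by move=> ->; case: (s1 v); case: (s2 v); case: (s2 (p v)).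
Qed.

Definition ap m (th : 'I_m -> R) (v : 'I_m) (x : bool) : R :=
  if val v == 0%N then 2^-1 else (1 + th v * spin R x) / 2.

Lemma spinM x y : spin R x * spin R y = spin R (x == y).
Proof. case: x; case: y; rewrite /spin /= ?mulr1 ?mul1r ?mulN1r ?opprK //. Qed.

Lemma Wt_T m (m0 : (0 < m)%N) (p : 'I_m -> 'I_m) th s :
  Wt p th s = 2 * \prod_v ap th v (Tm p s v).
Proof.
pose r : 'I_m := Ordinal m0.
rewrite (bigD1 r) //= /ap eqxx mulrA mulfV ?mul1r ?pnatr_eq0 //.
rewrite /Wt; apply: eq_big => v.
  by rewrite -(inj_eq val_inj).
move=> v0; rewrite ffunE (negbTE v0) /fac -mulrA spinM //.
Qed.

Lemma ap_sum m th (v : 'I_m) : ap th v true + ap th v false = 1.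
Proof.
rewrite /ap /spin; case: ifP => _; lra.
Qed.

Lemma ap_ge0 m th (v : 'I_m) x : (val v != 0%N -> -1 <= th v <= 1) -> 0 <= ap th v x.
Proof.
move=> H; rewrite /ap; case: eqP => [_|/eqP v0]; last have /andP[h1 h2] := H v0.
  by rewrite invr_ge0 ler0n.
case: x; rewrite /spin; lra.
Qed.

Lemma sum_Wt m (m0 : (0 < m)%N) (p : 'I_m -> 'I_m) th :
  hcond p -> \sum_s Wt p th s = 2.
Proof.
move=> hc.
under eq_bigr => s _ do rewrite Wt_T //.
rewrite -mulr_sumr.
have := reindex_inj (op := +%R) (x := 0) (P := xpredT)
    (F := fun t : {ffun 'I_m -> bool} => \prod_v ap th v (t v)) (Tm_inj hc).
move=> /= <-; rewrite sum_prod_ffun big1 ?mulr1 // => v _; exact: ap_sum.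
Qed.

Lemma part_sum m (lf : 'I_n -> 'I_m) (g : {ffun 'I_m -> bool} -> R) :
  \sum_(x : {ffun 'I_n -> bool}) \sum_(s : {ffun 'I_m -> bool} | [forall i, s (lf i) == x i]) g s
  = \sum_(s : {ffun 'I_m -> bool}) g s.
Proof.
rewrite (exchange_big_dep xpredT) //=; apply: eq_bigr => s _.
rewrite (big_pred1 [ffun i => s (lf i)]) // => x /=.
apply/forallP/eqP => [H|-> i]; last by rewrite ffunE.
by apply/ffunP => i; rewrite ffunE; apply/esym/eqP.
Qed.

Lemma tv_LD m (m0 : (0 < m)%N) (p : 'I_m -> 'I_m) th1 th2 lf :
  hcond p -> (forall v, val v != 0%N -> -1 <= th1 v <= 1) ->
  (forall v, val v != 0%N -> -1 <= th2 v <= 1) ->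
  tv_dist (LD p th1 lf) (LD p th2 lf)
    <= 2^-1 * \sum_(v : 'I_m | val v != 0%N) `|th1 v - th2 v|.
Proof.
move=> hc r1 r2; rewrite /tv_dist /LD.
apply: ler_wpM2l; first by rewrite invr_ge0 ler0n.
apply: (@le_trans _ _ (\sum_(x : {ffun 'I_n -> bool}) (\sum_(s : {ffun 'I_m -> bool} | [forall i, s (lf i) == x i])
           `|Wt p th1 s - Wt p th2 s|) / 2)).
  apply: ler_sum => x _; rewrite -mulrBl -sumrB normrM.
  rewrite [`|2^-1|]ger0_norm ?invr_ge0 ?ler0n //.
  by apply: ler_wpM2r; [rewrite invr_ge0 ler0n | apply: ler_norm_sum].
rewrite -mulr_suml part_sum.
under eq_bigr => s _ do rewrite !Wt_T // -mulrBr normrM.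
rewrite -mulr_sumr.
have := reindex_inj (op := +%R) (x := 0) (P := xpredT)
    (F := fun t : {ffun 'I_m -> bool} =>
       `|\prod_v ap th1 v (t v) - \prod_v ap th2 v (t v)|) (Tm_inj hc).
move=> /= <-.
rewrite [`|2|]ger0_norm ?ler0n // mulrC mulrA mulVf ?pnatr_eq0 // mul1r.
apply: (le_trans (@tele R m (ap th1) (ap th2) _ _ _ _)).
- by move=> v x; apply: ap_ge0; apply: r1.
- by move=> v x; apply: ap_ge0; apply: r2.
- by move=> v; apply: ap_sum.
- by move=> v; apply: ap_sum.
rewrite [X in _ <= X]big_mkcond /=; apply: ler_sum => v _.
rewrite /ap; case: eqP => [_|/eqP v0] /=; first by rewrite !subrr normr0 addr0.
rewrite /spin !mulr1 !mulrN1.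
have -> : (1 + th1 v) / 2 - (1 + th2 v) / 2 = (th1 v - th2 v) / 2 by lra.
have -> : (1 - th1 v) / 2 - (1 - th2 v) / 2 = - ((th1 v - th2 v) / 2) by lra.
rewrite normrN normrM [`|2^-1|]ger0_norm ?invr_ge0 ?ler0n //.
have -> : forall y : R, y / 2 + y / 2 = y by move=> y; lra.
by [].
Qed.

End LD.


Section Repr.
Variable R : realType.
Variable n : nat.

Definition acond m (e : rel 'I_m) (p : 'I_m -> 'I_m) :=
  forall u v, e u v = ((val u != 0%N) && (p u == v)) || ((val v != 0%N) && (p v == u)).

Lemma hcond_neq m (p : 'I_m -> 'I_m) : hcond p -> forall v, val v != 0%N -> p v != v.
Proof.
move=> [h hP] v v0; apply/eqP => E; have := hP v v0; by rewrite E ltnn.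
Qed.

Lemma cw_repr (M : tree_ising R n) (p : 'I_(nv M) -> 'I_(nv M)) s :
  acond (@adj R n M) p -> hcond p ->
  @config_weight R n M s = Wt p (fun v => @theta R n M v (p v)) s.
Proof.
move=> A hc; rewrite /config_weight pair_big_dep /=.
pose phi (v : 'I_(nv M)) := if (v < p v)%N then (v, p v) else (p v, v).
pose S := [set v : 'I_(nv M) | val v != 0%N].
have inj : {in S &, injective phi}.
  move: (hc) => [h hP].
  move=> v w; rewrite !inE => v0 w0; rewrite /phi.
  have := hP v v0; have := hP w w0.
  case: ifP => _; case: ifP => _ => h1 h2 [].
  - by [].
  - by move=> E1 E2; rewrite -E1 in h1; rewrite E2 in h2; have := ltn_trans h1 h2; rewrite ltnn.
  - by move=> E1 E2; rewrite -E2 in h1; rewrite E1 in h2; have := ltn_trans h1 h2; rewrite ltnn.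
  - by [].
rewrite (eq_bigl (fun pr => pr \in phi @: S)); last first.
  move=> pr; apply/idP/imsetP.
  - case: pr => u v /= /andP[uv]; rewrite A => /orP[/andP[u0 /eqP puv]|/andP[v0 /eqP pvu]].
      by exists u; [rewrite inE | rewrite /phi puv uv].
    by exists v; [rewrite inE | rewrite /phi pvu ltnNge (ltnW uv)].
  - move=> [w]; rewrite inE => w0 ->; rewrite /phi.
    have neq := hcond_neq hc w0.
    case: ifP => [lt|ge] /=; first by rewrite lt A w0 eqxx.
    have gt : (p w < w)%N by rewrite ltn_neqAle val_eqE neq leqNgt ge.
    by rewrite gt A w0 eqxx orbT.
rewrite big_imset //= /Wt; apply: eq_big => v; first by rewrite inE.
move=> v0; rewrite /phi /fac; case: ifP => _ //=.
by rewrite theta_sym mulrAC.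
Qed.

Lemma ld_repr (M : tree_ising R n) (p : 'I_(nv M) -> 'I_(nv M)) x :
  acond (@adj R n M) p -> hcond p ->
  @leaf_dist R n M x = LD p (fun v => @theta R n M v (p v)) (@leaf_vertex R n M) x.
Proof.
move=> A hc; rewrite /leaf_dist /LD.
have m0 : (0 < nv M)%N by case: (adj_tree M).
under eq_bigr => s _ do rewrite (cw_repr s A hc).
under [X in _ / X]eq_bigr => s _ do rewrite (cw_repr s A hc).
by rewrite sum_Wt.
Qed.

End Repr.


Definition phi m (p : 'I_m -> 'I_m) (v : 'I_m) :=
  if (v < p v)%N then (v, p v) else (p v, v).

Lemma phi_inj m (p : 'I_m -> 'I_m) : hcond p ->
  {in [set v : 'I_m | val v != 0%N] &, injective (phi p)}.
Proof.
move=> [h hP] v w; rewrite !inE => v0 w0; rewrite /phi.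
have := hP v v0; have := hP w w0.
case: ifP => _; case: ifP => _ => h1 h2 [].
- by [].
- by move=> E1 E2; rewrite -E1 in h1; rewrite E2 in h2; have := ltn_trans h1 h2; rewrite ltnn.
- by move=> E1 E2; rewrite -E2 in h1; rewrite E1 in h2; have := ltn_trans h1 h2; rewrite ltnn.
- by [].
Qed.

Section TreeParent.
Variables (m : nat) (e : rel 'I_m).
Hypothesis T : is_tree e.

Lemma tree_parent : exists p : 'I_m -> 'I_m, acond e p /\ hcond p.
Proof.
case: T => m0 esym eirr econ ned.
pose r : 'I_m := Ordinal m0.
pose P (v : 'I_m) (k : nat) :=
  [exists t : k.-tuple 'I_m, path e v t && (last v t == r)].
have exP : forall v, exists k, P v k.
  move=> v; have /connectP [pth pp lp] := econ v r.
  exists (size pth); apply/existsP; exists (in_tuple pth) => /=.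
  by rewrite pp -lp eqxx.
pose h v := ex_minn (exP v).
have hP : forall v, v != r -> exists w, e v w && (h w < h v)%N.
  move=> v vr; rewrite /h; case: ex_minnP => k /existsP [[t /= /eqP szt]] Ht _.
  case: t szt Ht => [|w t'] /= szt.
    by move=> H; rewrite H in vr.
  move=> /andP[/andP[evw pw] lw].
  exists w; rewrite evw /=.
  case: ex_minnP => kw _ /(_ (size t')) H.
  suff : (kw <= size t')%N by rewrite -szt.
  apply: H; apply/existsP; exists (in_tuple t'); by rewrite pw lw.
pose par v := odflt v [pick w | e v w && (h w < h v)%N].
have parP : forall v, v != r -> e v (par v) && (h (par v) < h v)%N.
  move=> v vr; rewrite /par; case: pickP => [w //|none].
  by have [w] := hP v vr; rewrite none.
have v0r : forall v : 'I_m, (val v != 0%N) = (v != r).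
  by move=> v; rewrite -val_eqE.
have hc : hcond par.
  by exists h => v; rewrite v0r => /parP /andP[].
exists par; split=> //.
have epar : forall v, val v != 0%N -> e v (par v).
  by move=> v; rewrite v0r => /parP /andP[].
pose S := [set v : 'I_m | val v != 0%N].
pose E := [set pr : 'I_m * 'I_m | (pr.1 < pr.2)%N && e pr.1 pr.2].
have sub : phi par @: S \subset E.
  apply/fintype.subsetP => pr /imsetP [w]; rewrite inE => w0 ->; rewrite inE /phi.
  have neq := hcond_neq hc w0.
  case: ifP => [lt|ge] /=; first by rewrite lt epar.
  have gt : (par w < w)%N by rewrite ltn_neqAle val_eqE neq leqNgt ge.
  by rewrite gt esym epar.
have cardS : #|S| = m.-1.
  have -> : S = [set~ r] by apply/setP => v; rewrite !inE v0r.
  by rewrite cardsC1 card_ord.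
have eqE : phi par @: S = E.
  apply/eqP; rewrite eqEcard sub /= card_in_imset ?cardS; last exact: phi_inj.
  by rewrite /nedges in ned; rewrite ned.
have key : forall u v : 'I_m, (u < v)%N -> e u v ->
    ((val u != 0%N) && (par u == v)) || ((val v != 0%N) && (par v == u)).
  move=> u v uv euv.
  have : (u, v) \in E by rewrite inE /= uv euv.
  rewrite -eqE => /imsetP [w]; rewrite inE => w0; rewrite /phi.
  case: ifP => _ [-> ->]; first by rewrite w0 eqxx.
  by rewrite w0 eqxx orbT.
move=> u v; apply/idP/idP.
- move=> euv; case: (ltngtP u v) => [lt|gt|eq].
  + exact: key.
  + by rewrite orbC; apply: key gt _; rewrite esym.
  + by rewrite (val_inj eq) eirr in euv.
- by case/orP => /andP[u0 /eqP <-]; [exact: epar | rewrite esym; exact: epar].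
Qed.
End TreeParent.

Lemma nv_bound (R : realType) (n : nat) (M : tree_ising R n) :
  (nv M <= 3 * n - 2)%N.
Proof.
have nle := @nle R n M.
case: (adj_tree M) => m0 esym eirr _ ned.
have io := @internal_ok R n M.
set m := nv M in nle m0 esym eirr ned io *.
set e := @adj R n M in esym eirr ned io *.
pose E := [set pr : 'I_m * 'I_m | (pr.1 < pr.2)%N && e pr.1 pr.2].
pose E' := [set pr : 'I_m * 'I_m | (pr.2 < pr.1)%N && e pr.1 pr.2].
pose D := [set pr : 'I_m * 'I_m | e pr.1 pr.2].
pose sw (pr : 'I_m * 'I_m) := (pr.2, pr.1).
have swinj : injective sw by move=> [a b] [c d] [-> ->].
have cE' : #|E'| = #|E|.
  rewrite -(card_preimset E swinj); congr #|pred_of_set _|; apply/setP => pr.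
  by rewrite !inE /= esym.
have cD : #|D| = (2 * m.-1)%N.
  have -> : D = E :|: E'.
    apply/setP => pr; rewrite !inE; case: (ltngtP pr.1 pr.2) => [_|_|eq] /=;
      rewrite ?orbF //.
    by rewrite (val_inj eq) eirr.
  rewrite cardsU cE' (_ : E :&: E' = finset.set0) ?cards0.
    by rewrite /nedges in ned; rewrite -/E ned; lia.
  apply/setP => pr; rewrite !inE; case: (ltngtP pr.1 pr.2) => /= _; rewrite ?andbF //.
have sD : (\sum_(u : 'I_m) deg e u)%N = #|D|.
  rewrite -sum1_card /deg.
  rewrite (eq_bigl (fun pr : 'I_m * 'I_m => xpredT pr.1 && e pr.1 pr.2)); last first.
    by move=> pr; rewrite inE.
  rewrite -(pair_big_dep xpredT (fun u w => e u w) (fun _ _ => 1%N)) /=.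
  by apply: eq_bigr => u _; rewrite -sum1_card; apply: eq_bigl => w; rewrite inE.
have lb : ((m - n) * 3 <= \sum_(u : 'I_m) deg e u)%N.
  apply: (@leq_trans (\sum_(u : 'I_m) (if (n <= u)%N then 3 else 0))%N).
    rewrite -(big_mkord xpredT (fun i => if (n <= i)%N then 3 else 0)%N).
    rewrite (big_cat_nat (n := n) (leq0n n) nle) /=.
    rewrite big_nat_cond big1 ?add0n; last first.
      by move=> i /andP[/andP[_ lt] _]; rewrite leqNgt lt.
    rewrite (eq_big_nat _ _ (F2 := fun _ => 3%N)) ?sum_nat_const_nat //.
    by move=> i /andP[-> _].
  apply: leq_sum => u _; case: ifP => // nu; by rewrite io.
rewrite sD cD in lb.
lia.
Qed.


Section Grid.
Variable R : realType.

Definition gridn (N j : nat) : R := -1 + 2 * j%:R / N%:R.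

Lemma gridn_range N j : (0 < N)%N -> (j <= N)%N -> -1 <= gridn N j <= 1.
Proof.
move=> N0 jN; rewrite /gridn.
have Np : 0 < N%:R :> R by rewrite ltr0n.
have : 0 <= j%:R / N%:R :> R by apply: divr_ge0; rewrite ler0n.
have : j%:R / N%:R <= 1 :> R by rewrite ler_pdivrMr // mul1r ler_nat.
move=> h1 h2; rewrite -mulrA; apply/andP; split; lra.
Qed.

Definition round (N : nat) (x : R) : 'I_N.+1 :=
  odflt ord0 [pick j : 'I_N.+1 | `|x - gridn N j| <= 2 / N%:R].

Lemma round_spec N x : (0 < N)%N -> -1 <= x <= 1 ->
  `|x - gridn N (round N x)| <= 2 / N%:R.
Proof.
move=> N0 /andP[x1 x2]; rewrite /round; case: pickP => [j //|none].
exfalso.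
have Np : 0 < N%:R :> R by rewrite ltr0n.
pose P j := (j <= N)%N && (gridn N j <= x).
have ex : exists j, P j by exists 0%N; rewrite /P /gridn /= mulr0 mul0r addr0.
have bd : forall j, P j -> (j <= N)%N by move=> j /andP[].
case: (ex_maxnP ex bd) => j /andP[jN gj] mx.
have gS : gridn N j.+1 = gridn N j + 2 / N%:R.
  by rewrite /gridn -natr1; ring.
case: (ltnP j N) => [jlt|jge].
  have : ~~ P j.+1 by apply/negP => /mx; rewrite ltnn.
  rewrite /P jlt /= -ltNge => lt.
  have := none (Ordinal (ltnW (jlt : j < N)%N : j < N.+1)%N); rewrite /= ger0_norm; last by rewrite subr_ge0.
  by rewrite lerBlDl -gS (ltW lt).
have jeq : j = N by apply/eqP; rewrite eqn_leq jN jge.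
have g1 : gridn N N = 1.
  by rewrite /gridn -mulrA mulfV ?mulr1 ?lt0r_neq0 //; lra.
have := none (Ordinal (ltnSn N)); rewrite /= g1.
rewrite jeq g1 in gj.
have -> : x = 1 by apply/eqP; rewrite eq_le x2 gj.
by rewrite subrr normr0 divr_ge0 ?ler0n.
Qed.

End Grid.

Lemma LD_transfer (R : realType) (n m1 m2 : nat) (E : m1 = m2)
  (p1 : 'I_m1 -> 'I_m1) (p2 : 'I_m2 -> 'I_m2) (th1 : 'I_m1 -> R) (th2 : 'I_m2 -> R)
  (lf1 : 'I_n -> 'I_m1) (lf2 : 'I_n -> 'I_m2) :
  (forall v1 v2, val v1 = val v2 -> val (p1 v1) = val (p2 v2)) ->
  (forall v1 v2, val v1 = val v2 -> val v1 != 0%N -> th1 v1 = th2 v2) ->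
  (forall i, val (lf1 i) = val (lf2 i)) ->
  LD p1 th1 lf1 = LD p2 th2 lf2.
Proof.
subst m2 => Hp Ht Hl; apply: boolp.funext => x; rewrite /LD; congr (_ / 2).
apply: eq_big => [s|s _].
  by apply: eq_forallb => i; rewrite (val_inj (Hl i)).
rewrite /Wt; apply: eq_bigr => v v0.
by rewrite (val_inj (Hp v v erefl)) (Ht v v erefl v0).
Qed.


Lemma tv_same (R : realType) n (mu : {ffun 'I_n -> bool} -> R) : tv_dist mu mu = 0.
Proof. by rewrite /tv_dist big1 ?mulr0 // => x _; rewrite subrr normr0. Qed.

Lemma ld_fun (R : realType) n (M : tree_ising R n) (p : 'I_(nv M) -> 'I_(nv M)) :
  acond (@adj R n M) p -> hcond p ->
  @leaf_dist R n M = LD p (fun v => @theta R n M v (p v)) (@leaf_vertex R n M).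
Proof. by move=> A H; apply: boolp.funext => x; apply: ld_repr. Qed.

Lemma val1 m (E : m = 1%N) (v : 'I_m) : val v = 0%N.
Proof. by subst m; case: v => [[|k]]. Qed.

Lemma nv1 (R : realType) (M : tree_ising R 1) : nv M = 1%N.
Proof. have := nv_bound M; have := @nle R 1 M; lia. Qed.

Lemma case_n1 (R : realType) (M1 M : tree_ising R 1) :
  tv_dist (leaf_dist M1) (leaf_dist M) = 0.
Proof.
have [p1 [A1 H1]] := tree_parent (adj_tree M1).
have [p2 [A2 H2]] := tree_parent (adj_tree M).
rewrite (ld_fun A1 H1) (ld_fun A2 H2).
rewrite (@LD_transfer R 1 _ _ (etrans (nv1 M1) (esym (nv1 M))) p1 p2 _
           (fun v => @theta R 1 M v (p2 v)) _ (@leaf_vertex R 1 M)) ?tv_same //.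
- by move=> v1 v2 _; rewrite (val1 (nv1 M1)) (val1 (nv1 M)).
- by move=> v1 v2 _; rewrite (val1 (nv1 M1)).
Qed.

Definition CT (n N : nat) := ('I_(3 * n).+1 * {ffun 'I_(3 * n).+1 -> 'I_(3 * n).+1}
                              * {ffun 'I_(3 * n).+1 -> 'I_N.+1})%type.

Section Cover.
Variables (R : realType) (n N : nat) (N0 : (0 < N)%N) (Many : tree_ising R n).

Definition Dc (c : CT n N) (M0 : tree_ising R n) : Prop :=
  exists p : 'I_(nv M0) -> 'I_(nv M0),
   [/\ nv M0 = val c.1.1, acond (@adj R n M0) p, hcond p,
       (forall v, val (p v) = val (c.1.2 (inord v))) &
       (forall v, val v != 0%N -> @theta R n M0 v (p v) = gridn R N (c.2 (inord v)))].

Definition Fc (c : CT n N) : tree_ising R n :=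
  match pselect (exists M0, Dc c M0) with
  | left H => proj1_sig (boolp.cid H)
  | right _ => Many
  end.

Lemma FcP c : (exists M0, Dc c M0) -> Dc c (Fc c).
Proof. by rewrite /Fc; case: pselect => // H _; exact: (proj2_sig (boolp.cid H)). Qed.

Lemma cover_main (M : tree_ising R n) : exists c : CT n N,
  tv_dist (leaf_dist (Fc c)) (leaf_dist M) <= (nv M)%:R / N%:R.
Proof.
have [p [A H]] := tree_parent (adj_tree M).
have hm := nv_bound M.
have m0 : (0 < nv M)%N by case: (adj_tree M).
set m := nv M in p A H hm m0 *.
pose K := (3 * n)%N.
have mK : forall v : 'I_m, (v < K.+1)%N.
  by move=> v; have := ltn_ord v; rewrite /K; lia.
pose pc := [ffun v : 'I_K.+1 =>
   inord (oapp (fun w : 'I_m => val (p w)) 0%N (insub (val v))) : 'I_K.+1].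
pose qc := [ffun v : 'I_K.+1 =>
   oapp (fun w : 'I_m => round N (@theta R n M w (p w))) ord0 (insub (val v))].
pose c : CT n N := (inord m, pc, qc).
have pcE : forall v : 'I_m, val (pc (inord v)) = val (p v).
  move=> v; rewrite ffunE.
  have -> : val (inord v : 'I_K.+1) = val v by exact: inordK (mK v).
  by rewrite valK /= inordK ?mK.
have qcE : forall v : 'I_m, qc (inord v) = round N (@theta R n M v (p v)).
  move=> v; rewrite ffunE.
  have -> : val (inord v : 'I_K.+1) = val v by exact: inordK (mK v).
  by rewrite valK.
pose thq (u v : 'I_m) := gridn R N (round N (@theta R n M u v)).
have thq_sym : forall u v, thq u v = thq v u by move=> u v; rewrite /thq theta_sym.
have thq_range : forall u v, @adj R n M u v -> -1 <= thq u v <= 1.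
  by move=> u v _; apply: gridn_range => //; rewrite -ltnS.
pose Mq := @TreeIsing R n m (@nle R n M) (@adj R n M) thq (@adj_tree R n M)
   (@leaves_ok R n M) (@internal_ok R n M) thq_sym thq_range.
have Dq : Dc c Mq.
  exists p; split=> //=.
  - by rewrite inordK // /K; lia.
  - by move=> v; rewrite pcE.
  - by move=> v _; rewrite qcE.
have [p0 [nv0 A0 H0 pP tP]] := FcP (ex_intro _ Mq Dq).
exists c.
rewrite (ld_fun A0 H0) (ld_fun A H).
have E : nv (Fc c) = m by rewrite nv0 /= inordK // /K; lia.
rewrite (@LD_transfer R n _ _ E p0 p _
  (fun v => gridn R N (round N (@theta R n M v (p v)))) _ (@leaf_vertex R n M)).
- apply: (le_trans (tv_LD m0 _ H _ _)).
  + by move=> v _; apply: gridn_range => //; rewrite -ltnS.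
  + by move=> v v0; apply: theta_range; rewrite A v0 eqxx.
  apply: (@le_trans _ _ (2^-1 * \sum_(v : 'I_m) (2 / N%:R))).
    apply: ler_wpM2l; first by rewrite invr_ge0 ler0n.
    rewrite big_mkcond; apply: ler_sum => v _; case: ifP => v0.
      rewrite distrC; apply: round_spec => //.
      by apply: theta_range; rewrite A v0 eqxx.
    by rewrite divr_ge0 ?ler0n.
  rewrite sumr_const card_ord -mulr_natr.
  have Nn : N%:R != 0 :> R by rewrite pnatr_eq0 -lt0n.
  by rewrite le_eqVlt; apply/orP; left; apply/eqP; field.
- move=> v1 v2 e12; rewrite pP /=.
  have -> : (v1 : nat) = v2 := e12.
  by rewrite pcE.
- move=> v1 v2 e12 v0; rewrite tP //=.
  have -> : (v1 : nat) = v2 := e12.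
  by rewrite qcE.
- by [].
Qed.
End Cover.


Theorem lemma17 (R : realType) :
  exists C : R, forall (n : nat), (1 <= n)%N ->
  forall eps : R, 0 < eps -> eps < 1 ->
  exists (k : nat) (F : 'I_k -> tree_ising R n),
    ln (k%:R : R) <= C * n%:R * ln (n%:R / eps) /\
    forall M : tree_ising R n, exists i : 'I_k,
      tv_dist (leaf_dist (F i)) (leaf_dist M) <= eps.
Proof.
exists 30 => n n1 eps e0 e1.
have nn1 : 1 <= n%:R :> R by rewrite ler1n.
have yn : n%:R <= n%:R / eps :> R by rewrite ler_pdivlMr //; nra.
have L0 : 0 <= ln (n%:R / eps : R) by apply: ln_ge0; lra.
have rhs0 : 0 <= 30 * n%:R * ln (n%:R / eps : R).
  by rewrite !mulr_ge0 // ?ler0n.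
case: (pselect (exists M : tree_ising R n, True)) => [[Many _]|noM]; last first.
  have F0 : 'I_0 -> tree_ising R n by case=> j; rewrite ltn0.
  exists 0%N, F0; split; first by rewrite ln0.
  by move=> M; exfalso; apply: noM; exists M.
case: (eqVneq n 1%N) => [n1e|n2].
  subst n; exists 1%N, (fun _ => Many); split.
    by rewrite (_ : 1%:R = 1) // ln1.
  by move=> M; exists ord0; rewrite case_n1; lra.
have n2' : (2 <= n)%N by rewrite ltn_neqAle eq_sym n2 n1.
set y := n%:R / eps in yn L0 rhs0 *.
have nn2 : 2 <= n%:R :> R by rewrite ler_nat.
have y2 : 2 <= y by lra.
have yeps : y * eps = n%:R by rewrite /y divfK // lt0r_neq0.
have exN : exists N : nat, 3 * y <= N%:R.
  by exists (Num.Def.archi_bound (3 * y)); apply: ltW; apply: archi_boundP; lra.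
case: (ex_minnP exN) => N NP Nmin.
have N0 : (0 < N)%N by move: NP; case: N {Nmin} => //=; lra.
have Nub : N%:R <= 3 * y + 1.
  case: N NP Nmin N0 => [//|N'] NP Nmin _.
  have : ~~ (3 * y <= N'%:R) by apply/negP => /Nmin; rewrite ltnn.
  rewrite -ltNge => lt; rewrite -natr1; lra.
exists #|{: CT n N}|, (fun i => Fc Many (enum_val i)); split; last first.
  move=> M; have [c Hc] := cover_main N0 Many M.
  exists (enum_rank c); rewrite enum_rankK; apply: le_trans Hc _.
  have hm := nv_bound M.
  have Np : 0 < N%:R :> R by rewrite ltr0n.
  rewrite ler_pdivrMr //.
  have : (nv M)%:R <= 3 * n%:R :> R.
    by rewrite -(natrM R 3 n) ler_nat; lia.
  nra.
rewrite /CT !card_prod !card_ffun !card_ord.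
rewrite !natrM !natrX.
set a : R := ((3 * n).+1)%:R.
set b : R := (N.+1)%:R.
have aE : a = 3 * n%:R + 1 by rewrite /a -natr1 natrM.
have bE : b = N%:R + 1 by rewrite /b -natr1.
have a0 : 0 < a by rewrite ltr0n.
have b0 : 0 < b by rewrite ltr0n.
have y0 : 0 < y by lra.
have ax : 0 < a ^+ (3 * n).+1 by rewrite exprn_gt0.
have bx : 0 < b ^+ (3 * n).+1 by rewrite exprn_gt0.
rewrite (lnM (x := a * a ^+ (3 * n).+1)); last 2 first.
- by rewrite posrE mulr_gt0.
- by rewrite posrE.
rewrite lnM ?posrE // !lnXn //.
have y3 : y ^+ 3 = y * (y * y) by rewrite !exprS expr0 mulr1.
have y3b : 4 * y <= y ^+ 3 by rewrite y3; nra.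
have ly3 : ln (y ^+ 3) = 3 * ln y by rewrite lnXn // mulr_natl.
have la : ln a <= 3 * ln y.
  rewrite -ly3 ler_ln ?posrE ?exprn_gt0 //; lra.
have lb : ln b <= 3 * ln y.
  rewrite -ly3 ler_ln ?posrE ?exprn_gt0 //; lra.
rewrite -[ln a *+ _]mulr_natr -[ln b *+ _]mulr_natr -/a.
have h1 : ln a * a <= 3 * ln y * a by apply: ler_wpM2r; [exact: ltW | exact: la].
have h2 : ln b * a <= 3 * ln y * a by apply: ler_wpM2r; [exact: ltW | exact: lb].
have h3 : ln y <= n%:R * ln y.
  by rewrite -{1}(mul1r (ln y)); apply: ler_wpM2r.
have h4 : 3 * ln y * a = 9 * (n%:R * ln y) + 3 * ln y by rewrite aE; ring.
have h5 : 30 * n%:R * ln y = 30 * (n%:R * ln y) by ring.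
rewrite h5; lra.
Qed.
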